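(* Let $K$ be a number field, $f$ a monic family homogeneous of degree $d$ and weight $e$, and let $\mathfrak{a},\mathfrak{b}$ be $M_K$-constants as in the following property: for all $v\in M_K$ and $t,z\in K$ with $\log|z|_v>\frac1e\log^+|t|_v+\mathfrak a_v$ one has $|f_t(z)|_v\ge|z|_v$ and $|G_{f_t,v}(z)-\log|z|_v|\le\mathfrak b_v$ (such constants exist, with $\mathfrak b_v=0$ at non-archimedean $v$). Then for any $v\in M_K$, any $t\in K$ with $|t|_v\leq 1$, and any two distinct $x, y\in K$, \[g_{f_t, v}(x, y)\geq -\max\{\mathfrak{a}_v, \mathfrak{b}_v\}-\log 2_v.\]
   Context: $M_K$: places of $K$, absolute values extending standard ones on $\mathbb{Q}$. An $M_K$-constant is a real function on $M_K$ vanishing at all but finitely many places. For $r>0$, $r_v=r$ if $v$ is archimedean and $r_v=1$ otherwise. $\log^+X=\log\max\{1,X\}$. Monic family homogeneous of degree $d$ and weight $e\ge 2$: $f_t(z)=\prod_{i=1}^{d/e}(z^e-\beta_i t)$ with fixed nonzero $\beta_i\in K$. $G_{g,v}(P)=\lim_{n\to\infty}d^{-n}\log^+|g^n(P)|_v$, and $g_{g,v}(x,y)=-\log|x-y|_v+G_{g,v}(x)+G_{g,v}(y)$ for $x\ne y$. *)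

(* Defs.v *)
From Stdlib Require Import Reals Classical ClassicalEpsilon.
From HB Require Import structures.
From mathcomp Require Import all_boot all_order all_algebra all_field.
Delimit Scope ring_scope with ring.
Set Implicit Arguments. Unset Strict Implicit. Unset Printing Implicit Defensive.
Import GRing.Theory.
Open Scope R_scope.

Definition intR (z : int) : R :=
  match z with Posz n => INR n | Negz n => Ropp (INR n.+1) end.
Definition ratR (q : rat) : R := Rdiv (intR (numq q)) (intR (denq q)).

(* standard p-adic absolute value on Q: |q|_p = p^(-ord_p q), |0|_p = 0 *)
Definition padicQ (p : nat) (q : rat) : R :=
  if q == GRing.zero then 0
  else powerRZ (INR p)
         (Z.sub (Z.of_nat (logn p `|denq q|%N)) (Z.of_nat (logn p `|numq q|%N))).

Section Places.
Variable K : fieldExtType rat.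

Definition is_absval (v : K -> R) : Prop :=
  (forall x, (0 <= v x)) /\
  (forall x, v x = 0 <-> x = GRing.zero) /\
  (forall x y, v (GRing.mul x y) = v x * v y) /\
  (forall x y, v (GRing.add x y) <= v x + v y).

Definition is_arch (v : K -> R) : Prop :=
  forall q : rat, v (ratr q) = Rabs (ratR q).

Definition extends_padic (p : nat) (v : K -> R) : Prop :=
  forall q : rat, v (ratr q) = padicQ p q.

Definition is_place (v : K -> R) : Prop :=
  is_absval v /\ (is_arch v \/ exists p, prime p /\ extends_padic p v).

Definition MK_const (c : (K -> R) -> R) : Prop :=
  exists l : list (K -> R), forall v, is_place v -> ~ List.In v l -> c v = 0.

Definition rv (r : R) (v : K -> R) : R :=
  if excluded_middle_informative (is_arch v) then r else 1.

(* monic family homogeneous of degree e * size beta and weight e *)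
Definition fam (beta : seq K) (e : nat) (t z : K) : K :=
  (\prod_(bb <- beta) (z ^+ e - bb * t))%ring.
End Places.

Definition logplus (X : R) : R := ln (Rmax 1 X).

(* the limit of a real sequence (0 if it does not converge) *)
Definition lim_seq (u : nat -> R) : R :=
  match excluded_middle_informative (exists l, Un_cv u l) with
  | left H => proj1_sig (constructive_indefinite_description _ H)
  | right _ => 0
  end.

Definition Gv {K : Type} (v : K -> R) (g : K -> K) (d : nat) (P : K) : R :=
  lim_seq (fun n => (logplus (v (iter n g P)) / INR d ^ n)).

Definition gv {K : fieldExtType rat} (v : K -> R) (g : K -> K) (d : nat)
  (x y : K) : R :=
  (- ln (v (x - y)%ring) + Gv v g d x + Gv v g d y).

(* Main.v *)
Require Import Defs.
From Stdlib Require Import Reals Lra Lia ZArith Classical ClassicalEpsilon.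
From mathcomp Require Import all_boot all_order all_algebra all_field.
Import GRing.Theory.
Open Scope R_scope.

Section H.
Variable K : fieldExtType rat.
Variable v : K -> R.
Hypothesis Hv : is_absval v.

Lemma v_ge0 x : 0 <= v x.
Proof. by case: Hv. Qed.

Lemma v_eq0 x : v x = 0 <-> x = 0%R.
Proof. by case: Hv => _ []. Qed.

Lemma vM x y : v (x * y)%R = v x * v y.
Proof. by case: Hv => _ [] _ []. Qed.

Lemma vD x y : v (x + y)%R <= v x + v y.
Proof. by case: Hv => _ [] _ [] _. Qed.

Lemma v1 : v 1%R = 1.
Proof.
have h := vM 1%R 1%R. rewrite mulr1 in h.
have nz : v 1%R <> 0 by move/v_eq0; apply/eqP; exact: oner_neq0.
have := v_ge0 1%R. nra.
Qed.

Lemma vN1 : v (-1)%R = 1.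
Proof.
have h := vM (-1)%R (-1)%R. rewrite mulrNN mulr1 v1 in h.
have := v_ge0 (-1)%R. nra.
Qed.

Lemma vN x : v (- x)%R = v x.
Proof. by rewrite -mulN1r vM vN1 Rmult_1_l. Qed.

Lemma vX x n : v (x ^+ n)%R = v x ^ n.
Proof.
elim: n => [|n IH]; first by rewrite expr0 v1.
by rewrite exprS vM IH.
Qed.

Lemma vsum (F : nat -> K) B m :
  (forall i, (i < m)%N -> v (F i) <= B) ->
  v (\sum_(i < m) F i)%R <= INR m * B.
Proof.
elim: m => [|m IH] H.
  rewrite big_ord0. have := proj2 (v_eq0 0%R) erefl. simpl; lra.
rewrite big_ord_recr S_INR.
apply: Rle_trans (vD _ _) _.
have h1 : v (\sum_(i < m) F i)%R <= INR m * B.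
  apply: IH => i Hi; apply: H; exact: ltnW.
have h2 := H m (ltnSn m). rewrite Rmult_plus_distr_r Rmult_1_l. apply: Rplus_le_compat; [exact: h1 | exact: h2].
Qed.

Lemma padic_nat p n : prime p -> extends_padic p v -> v (n%:R)%R <= 1.
Proof.
move=> pp Hp.
rewrite -(ratr_nat K n) Hp /padicQ.
case: eqP => [_|nz]; first lra.
have -> : (n%:R : rat)%R = ((n%:Z)%:~R)%R by rewrite pmulrn.
rewrite numq_int denq_int /= logn1.
set k := logn p n.
have p1 : 1 <= INR p.
  have := prime_gt1 pp. move/leP => h. apply le_INR in h. simpl in h. lra.
case: k => [|k]; first (simpl; lra).
change (Z.sub (Z.of_nat 0) (Z.of_nat k.+1)) with (Z.neg (Pos.of_succ_nat k)); rewrite /powerRZ.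
set m := Pos.to_nat _.
have h := pow_R1_Rle (INR p) m p1.
by have := Rinv_le_contravar 1 _ Rlt_0_1 h; rewrite Rinv_1 /m.
Qed.

Lemma growth h n : 0 <= h ->
  (1 + h) ^ n >= 1 + INR n * h + INR n * (INR n - 1) / 2 * h ^ 2.
Proof.
move=> h0; elim: n => [|n IH]; first (simpl; lra).
rewrite S_INR /=.
have hn := pos_INR n.
have hnn : 0 <= INR n * (INR n - 1).
  case: n {IH hn} => [|n]; first (simpl; lra).
  have := pos_INR n. rewrite S_INR. nra.
have h3 : 0 <= INR n * (INR n - 1) * h ^ 3 by apply: Rmult_le_pos => //; apply: pow_le.
have h2 : 0 <= INR n * h ^ 2 by apply: Rmult_le_pos => //; nra.
set P := (1 + h) ^ n in IH *.
have : (1 + h) * P >= (1 + h) * (1 + INR n * h + INR n * (INR n - 1) / 2 * h ^ 2).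
  apply: Rle_ge; apply: Rmult_le_compat_l; lra.
simpl in *. nra.
Qed.

Lemma ultra_aux p x y : prime p -> extends_padic p v ->
  forall n, v (x + y)%R ^ n <= INR n.+1 * Rmax (v x) (v y) ^ n.
Proof.
move=> pp Hp n.
rewrite -vX exprDn.
apply: (vsum (fun i => x ^+ (n - i) * y ^+ i *+ 'C(n, i))%R) => i Hi.
rewrite -mulr_natr vM vM !vX.
have c1 := padic_nat p 'C(n,i) pp Hp.
have hx := v_ge0 x. have hy := v_ge0 y.
have hM : 0 <= Rmax (v x) (v y) by apply: Rle_trans hx (Rmax_l _ _).
have ex : v x ^ (n - i) <= Rmax (v x) (v y) ^ (n - i).
  apply: pow_incr; split => //; exact: Rmax_l.
have ey : v y ^ i <= Rmax (v x) (v y) ^ i.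
  apply: pow_incr; split => //; exact: Rmax_r.
have -> : Rmax (v x) (v y) ^ n = Rmax (v x) (v y) ^ (n - i) * Rmax (v x) (v y) ^ i.
  rewrite -pow_add; congr (_ ^ _). rewrite plusE subnK //; exact: ltnSE.
have a0 : 0 <= v x ^ (n - i) by apply: pow_le.
have b0 : 0 <= v y ^ i by apply: pow_le.
have c0 := v_ge0 ('C(n, i)%:R)%R.
have : v x ^ (n - i) * v y ^ i <= Rmax (v x) (v y) ^ (n - i) * Rmax (v x) (v y) ^ i.
  apply: Rmult_le_compat => //.
have : 0 <= v x ^ (n - i) * v y ^ i by apply: Rmult_le_pos.
nra.
Qed.

Lemma ultra p x y : prime p -> extends_padic p v ->
  v (x + y)%R <= Rmax (v x) (v y).
Proof.
move=> pp Hp.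
set S := v (x + y)%R. set M := Rmax (v x) (v y).
have hM : 0 <= M by apply: Rle_trans (v_ge0 x) (Rmax_l _ _).
destruct (Rle_dec S M) as [|hlt]; first done.
exfalso. apply Rnot_le_lt in hlt.
have M0 : 0 < M.
  destruct (Rle_lt_or_eq_dec _ _ hM) as [|e0]; first done.
  exfalso.
  have ex : v x = 0 by have := v_ge0 x; have := Rmax_l (v x) (v y); rewrite -/M -e0; lra.
  have ey : v y = 0 by have := v_ge0 y; have := Rmax_r (v x) (v y); rewrite -/M -e0; lra.
  have := vD x y. rewrite -/S. lra.
set h := S / M - 1.
have h0 : 0 < h.
  rewrite /h. apply Rlt_Rminus. rewrite -(Rinv_r M); last lra.
  apply: Rmult_lt_compat_r => //; exact: Rinv_0_lt_compat.
have h2 : 0 < h ^ 2 / 2 by have := pow_lt h 2 h0; lra.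
have [N [HN N0]] := archimed_cor1 _ h2.
set n := N.+1.
have := ultra_aux p x y pp Hp n.
have := growth h n (Rlt_le _ _ h0).
have -> : 1 + h = S / M by rewrite /h; lra.
rewrite Rpow_mult_distr pow_inv.
have Mn : 0 < M ^ n by apply: pow_lt.
have INRN : 0 < INR N by apply: lt_0_INR.
have : 2 <= INR N * h ^ 2.
  have := Rmult_lt_compat_l (INR N) _ _ INRN HN.
  rewrite Rinv_r; last lra. lra.
rewrite /n S_INR S_INR.
have hh : 0 < h ^ 2 by apply: pow_lt.
move=> big G U.
have Hg : S ^ N.+1 * / M ^ N.+1 > INR N + 1 + 1.
  have : (INR N + 1) * (INR N + 1 - 1) / 2 * h ^ 2 >= INR N + 1.
    have e : (INR N + 1) * (INR N + 1 - 1) / 2 * h ^ 2 = (INR N + 1) * (INR N * h^2) / 2 by field.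
    rewrite e. nra.
  nra.
have := Rmult_lt_compat_r (M ^ N.+1) _ _ Mn Hg.
have e : S ^ N.+1 * / M ^ N.+1 * M ^ N.+1 = S ^ N.+1.
  field; apply: pow_nonzero; lra.
rewrite e -/S -/M S_INR in U *.
move=> W. exact: (Rlt_not_le _ _ W U).
Qed.
End H.
Lemma ln_le x y : 0 < x -> x <= y -> ln x <= ln y.
Proof.
move=> h0 h. destruct (Rle_lt_or_eq_dec _ _ h) as [h'|h'].
  left; exact: ln_increasing.
by rewrite h'; right.
Qed.

Lemma lim_ge0 (u : nat -> R) l : (forall n, 0 <= u n) -> Un_cv u l -> 0 <= l.
Proof.
move=> H Hc. destruct (Rle_dec 0 l) as [|hl]; first done.
exfalso. apply Rnot_le_lt in hl.
have [N HN] := Hc (- l) ltac:(lra).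
have := HN N (le_n N). rewrite /Rdist. have := H N.
move=> h1 h2. have := Rle_abs (u N - l). lra.
Qed.

Lemma Gv_ge0 {K : Type} (v : K -> R) g d P : 0 <= Gv v g d P.
Proof.
rewrite /Gv /lim_seq.
case: excluded_middle_informative => [H|_]; last lra.
case: (constructive_indefinite_description _ H) => l Hl /=.
apply: (@lim_ge0 _ l _ Hl) => n.
have h1 : 0 <= logplus (v (iter n g P)).
  rewrite /logplus. have := Rmax_l 1 (v (iter n g P)).
  move=> hm. rewrite -ln_1. apply: ln_le; lra.
have h2 : 0 <= INR d ^ n by apply: pow_le; apply: pos_INR.
rewrite /Rdiv. apply: Rmult_le_pos => //.
destruct (Rle_lt_or_eq_dec _ _ h2) as [h3|h3].
  left. exact: Rinv_0_lt_compat.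
rewrite -h3 Rinv_0. lra.
Qed.

Theorem lemma2p2 (K : fieldExtType rat) (e : nat) (beta : seq K)
  (a b : (K -> R) -> R) :
  (2 <= e)%N -> (0 < size beta)%N ->
  (forall bb, bb \in beta -> bb <> GRing.zero) ->
  MK_const a -> MK_const b ->
  (forall (v : K -> R) (t z : K), is_place v -> z <> GRing.zero ->
     ln (v z) > / INR e * logplus (v t) + a v ->
     v (fam beta e t z) >= v z /\
     Rabs (Gv v (fam beta e t) (e * size beta) z - ln (v z)) <= b v) ->
  forall (v : K -> R) (t x y : K), is_place v -> v t <= 1 -> x <> y ->
    gv v (fam beta e t) (e * size beta) x y
      >= - Rmax (a v) (b v) - ln (rv 2 v).
Proof.
move=> _ _ _ _ _ Hyp v t x0 y0 Hpl Ht.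
have Hv : is_absval v by case: Hpl.
have Hlp : logplus (v t) = 0 by rewrite /logplus Rmax_left // ln_1.
have key : forall x y, x <> y -> v y <= v x ->
    gv v (fam beta e t) (e * size beta) x y
      >= - Rmax (a v) (b v) - ln (rv 2 v).
  move=> x y nxy hyx.
  have c0 : 0 < rv 2 v by rewrite /rv; case: excluded_middle_informative => H0 /=; lra.
  have hc : v (x - y)%R <= rv 2 v * v x.
    rewrite /rv; case: excluded_middle_informative => Ha /=.
      have := @vD _ _ Hv x (- y)%R. rewrite (@vN _ _ Hv). lra.
    case: (Hpl) => _ [//|[p [pp Hp]]].
    have := @ultra _ _ Hv p x (- y)%R pp Hp. rewrite (@vN _ _ Hv) Rmax_left //. lra.
  have d0 : 0 < v (x - y)%R.
    have := @v_ge0 _ _ Hv (x - y)%R. move=> h. destruct (Rle_lt_or_eq_dec _ _ h) as [|h']; first done.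
    exfalso. apply: nxy. apply/eqP. rewrite -subr_eq0. apply/eqP. apply/(@v_eq0 _ _ Hv). by rewrite h'.
  have x0' : 0 < v x.
    have : 0 < rv 2 v * v x by apply: (Rlt_le_trans _ _ _ d0 hc).
    move=> h. destruct (Rle_lt_or_eq_dec _ _ (@v_ge0 _ _ Hv x)) as [|h']; first done.
    rewrite -h' Rmult_0_r in h. lra.
  have hln : ln (v (x - y)%R) <= ln (rv 2 v) + ln (v x).
    rewrite -ln_mult //. apply: ln_le => //.
  have Gy := Gv_ge0 v (fam beta e t) (e * size beta) y.
  rewrite /gv.
  destruct (Rle_dec (ln (v x)) (a v)) as [hl|hl].
    have Gx := Gv_ge0 v (fam beta e t) (e * size beta) x.
    have := Rmax_l (a v) (b v). lra.
  apply Rnot_le_lt in hl.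
  have xn0 : x <> 0%R by move=> ex; move: x0'; rewrite ex (proj2 (@v_eq0 _ _ Hv 0%R) erefl); lra.
  have [_ hG] := Hyp v t x Hpl xn0 ltac:(rewrite Hlp Rmult_0_r Rplus_0_l; lra).
  have := Rle_abs (ln (v x) - Gv v (fam beta e t) (e * size beta) x).
  rewrite Rabs_minus_sym. move=> hh.
  have := Rmax_r (a v) (b v). lra.
move=> nxy.
destruct (Rle_dec (v y0) (v x0)) as [h|h]; first exact: key.
have E : gv v (fam beta e t) (e * size beta) x0 y0 = gv v (fam beta e t) (e * size beta) y0 x0.
  rewrite /gv.
  have E1 : v (x0 - y0)%R = v (y0 - x0)%R by rewrite -opprB (@vN _ _ Hv).
  rewrite E1. ring.
rewrite E. apply: key; [exact: nesym | lra].
Qed.
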